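(* Let $A,B,C$ be subspaces. (a) If $A\perp^{\circ}B$, then $B\perp^{\circ}A$. (b) If $A\perp^{\circ}B$, then $A\cap B\neq\emptyset$. (c) If $A\perp^{\circ}B$, $B\parallel C$ and $A\cap C\neq\emptyset$, then $A\perp^{\circ}C$. (d) If $\emptyset\neq A\subsetneq B\subsetneq C$, then there is a unique subspace $B'$ such that $B\cap B'=A$, $B\perp^{\circ}B'$, and $B\sqcup B'=C$. (e) If $A\perp^{\circ}B$ and $A\perp^{\circ}C$, then $A\perp^{\circ}(B\sqcup C)$. (f) If $A\perp^{\circ}B$ and $A\cap B\subset C\subset B$, then $A\perp^{\circ}C$. (g) If $A\perp^{\circ}B$ and $A\cap B\subset C\subset A$, then $A\perp^{\circ}(B\sqcup C)$. (h) If $A\perp^{\circ}B$, $A\perp^{\circ}C$, and $A\cap B\cap C\neq\emptyset$, then $A\perp^{\circ}(B\cap C)$.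
   Context: Let $V$ be a vector space over a field with a nondegenerate symmetric bilinear form $\xi$ having no isotropic vectors. (Affine) subspaces are sets $p+W$ with $W$ a linear subspace (its direction); the empty set is also regarded as a subspace. $B\parallel C$ means $B$ and $C$ are parallel, i.e. $C$ is a translate of $B$ (they have the same direction). $X_1\sqcup X_2$ denotes the least subspace containing $X_1\cup X_2$. For nonempty subspaces $X,Y$: $X\perp Y$ iff $\xi(b-a,d-c)=0$ for all $a,b\in X$, $c,d\in Y$; $X\perp_x Y$ iff $X\perp Y$ and $X\cap Y\neq\emptyset$. $X_1\perp^{\circ}X_2$ iff there are a point $q\in X_1\cap X_2$ and subspaces $Z_1,Z_2$ with $q\in Z_1,Z_2$, $Z_i\perp_x X_1\cap X_2$, $Z_1\perp_x Z_2$, and $(X_1\cap X_2)\sqcup Z_i=X_i$ for $i=1,2$. *)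

(* Defs.v *)
From HB Require Import structures.
From mathcomp Require Import all_boot all_algebra.
Set Implicit Arguments. Unset Strict Implicit. Unset Printing Implicit Defensive.
Import GRing.Theory.
Local Open Scope ring_scope.

Section AffineOrtho.
Variables (F : fieldType) (V : vectType F).

Definition eqset (X Y : V -> Prop) : Prop := forall x, X x <-> Y x.
Definition incl (X Y : V -> Prop) : Prop := forall x, X x -> Y x.
Definition nonempty (X : V -> Prop) : Prop := exists x, X x.
Definition meet (X Y : V -> Prop) : V -> Prop := fun x => X x /\ Y x.

Definition subspace (X : V -> Prop) : Prop :=
  (forall x, ~ X x) \/
  exists (p : V) (W : {vspace V}), forall x, X x <-> (x - p \in W).

Definition parallel (B C : V -> Prop) : Prop :=
  exists t : V, forall x, C x <-> B (x - t).

Definition join (X1 X2 : V -> Prop) : V -> Prop :=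
  fun x => forall Y, subspace Y -> (forall y, X1 y \/ X2 y -> Y y) -> Y x.

Variable xi : V -> V -> F.

Definition perp (X Y : V -> Prop) : Prop :=
  nonempty X /\ nonempty Y /\
  forall a b c d, X a -> X b -> Y c -> Y d -> xi (b - a) (d - c) = 0.

Definition perpx (X Y : V -> Prop) : Prop := perp X Y /\ nonempty (meet X Y).

Definition perpo (X1 X2 : V -> Prop) : Prop :=
  exists q, meet X1 X2 q /\
  exists Z1 Z2 : V -> Prop,
    subspace Z1 /\ subspace Z2 /\ Z1 q /\ Z2 q /\
    perpx Z1 (meet X1 X2) /\ perpx Z2 (meet X1 X2) /\ perpx Z1 Z2 /\
    eqset (join (meet X1 X2) Z1) X1 /\ eqset (join (meet X1 X2) Z2) X2.

End AffineOrtho.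

Definition good_form (F : fieldType) (V : vectType F) (xi : V -> V -> F) : Prop :=
  [/\ forall (a : F) (u v w : V), xi (a *: u + v) w = a * xi u w + xi v w,
      forall u v : V, xi u v = xi v u,
      forall u : V, (forall v, xi u v = 0) -> u = 0
    & forall v : V, xi v v = 0 -> v = 0].

(* Main.v *)
Require Import Defs.
From Stdlib Require Import Setoid.
From mathcomp Require Import all_boot all_algebra.
Set Implicit Arguments. Unset Strict Implicit. Unset Printing Implicit Defensive.
Import GRing.Theory.
Local Open Scope ring_scope.

Section Aux.
Variables (F : fieldType) (V : vectType F) (xi : V -> V -> F).
Hypothesis hlin : forall (a : F) (u v w : V), xi (a *: u + v) w = a * xi u w + xi v w.
Hypothesis hsym : forall u v : V, xi u v = xi v u.
Hypothesis hanis : forall v : V, xi v v = 0 -> v = 0.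

Lemma xi0l w : xi 0 w = 0.
Proof. have := hlin (-1) w w w. by rewrite scaleN1r addNr mulN1r addNr. Qed.
Lemma xiDl u v w : xi (u + v) w = xi u w + xi v w.
Proof. by have := hlin 1 u v w; rewrite scale1r mul1r. Qed.
Lemma xiZl a u w : xi (a *: u) w = a * xi u w.
Proof. by have := hlin a u 0 w; rewrite addr0 xi0l addr0. Qed.
Lemma xiNl u w : xi (- u) w = - xi u w.
Proof. by rewrite -scaleN1r xiZl mulN1r. Qed.
Lemma xiBl u v w : xi (u - v) w = xi u w - xi v w.
Proof. by rewrite xiDl xiNl. Qed.
Lemma xi0r w : xi w 0 = 0. Proof. by rewrite hsym xi0l. Qed.
Lemma xiDr u v w : xi w (u + v) = xi w u + xi w v.
Proof. by rewrite !(hsym w) xiDl. Qed.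
Lemma xiZr a u w : xi w (a *: u) = a * xi w u.
Proof. by rewrite !(hsym w) xiZl. Qed.
Lemma xiBr u v w : xi w (u - v) = xi w u - xi w v.
Proof. by rewrite !(hsym w) xiBl. Qed.

Definition orth (X : {vspace V}) (v : V) := forall a, a \in X -> xi a v = 0.

Lemma orthD (X : {vspace V}) u v : orth X u -> orth X v -> orth X (u + v).
Proof. by move=> hu hv a aX; rewrite xiDr hu // hv // addr0. Qed.
Lemma orthB (X : {vspace V}) u v : orth X u -> orth X v -> orth X (u - v).
Proof. by move=> hu hv a aX; rewrite xiBr hu // hv // subr0. Qed.
Lemma orthZ (X : {vspace V}) k u : orth X u -> orth X (k *: u).
Proof. by move=> hu a aX; rewrite xiZr hu // mulr0. Qed.
Lemma orth0 (X : {vspace V}) : orth X 0. Proof. by move=> a _; rewrite xi0r. Qed.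
Lemma orthS (X Y : {vspace V}) v : (Y <= X)%VS -> orth X v -> orth Y v.
Proof. by move=> /subvP sYX h a /sYX; apply: h. Qed.
Lemma orth_self (X : {vspace V}) v : v \in X -> orth X v -> v = 0.
Proof. by move=> vX h; apply: hanis; apply: h. Qed.

Lemma proj_seq (s : seq V) v : exists2 e, e \in <<s>>%VS & orth <<s>>%VS (v - e).
Proof.
elim: s v => [|x s IH] v.
  exists 0; first by rewrite mem0v.
  by move=> a; rewrite span_nil memv0 => /eqP ->; rewrite xi0l.
have [e' e's o'] := IH v; have [ex exs ox] := IH x.
have sub1 : (<<s>> <= <<x :: s>>)%VS by rewrite span_cons addvSr.
have xin : x \in <<x :: s>>%VS.
  by rewrite span_cons; apply: (subvP (addvSl _ _)); apply: memv_line.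
have orthx : forall w, orth <<s>>%VS w -> xi x w = 0 -> orth <<x :: s>>%VS w.
  move=> w ow hxw a; rewrite span_cons => /memv_addP[b /vlineP[k ->] [c cs ->]].
  by rewrite xiDl xiZl hxw mulr0 add0r ow.
set wx := x - ex.
have [wx0 | wxn] := eqVneq (xi wx wx) 0.
  have hw := hanis wx0.
  exists e'; first by apply: (subvP sub1).
  apply: orthx => //.
  have -> : x = ex by apply/eqP; rewrite -subr_eq0 -/wx hw.
  by apply: o'.
set c := xi wx (v - e') / xi wx wx.
exists (e' + c *: wx).
  rewrite memvD ?memvZ //; first by apply: (subvP sub1).
  by rewrite memvB // (subvP sub1).
have -> : v - (e' + c *: wx) = (v - e') - c *: wx by rewrite opprD addrA.
apply: orthx; first by apply: orthB => //; apply: orthZ.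
have -> : x = ex + wx by rewrite /wx addrC subrK.
rewrite xiDl xiBr xiZr o' // (ox ex exs) mulr0 subr0 add0r xiBr xiZr.
by rewrite /c mulfVK // subrr.
Qed.

Lemma proj (E : {vspace V}) v : exists2 e, e \in E & orth E (v - e).
Proof. by rewrite -(span_basis (vbasisP E)); apply: proj_seq. Qed.


Definition aff (p : V) (W : {vspace V}) : V -> Prop := fun x => x - p \in W.

Lemma aff_sub p W : subspace (aff p W).
Proof. by right; exists p, W. Qed.
Lemma aff_pt p W : aff p W p.
Proof. by rewrite /aff subrr mem0v. Qed.

Lemma sub_rep X q : subspace X -> X q -> exists W, eqset X (aff q W).
Proof.
case=> [h /h [] | [p [W hW]]] Xq; exists W => x.
have hq := (hW q).1 Xq.
have e1 : x - q = (x - p) - (q - p) by rewrite opprB addrA subrK.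
have e2 : x - p = (x - q) + (q - p) by rewrite addrA subrK.
split.
  by move=> /hW h; rewrite /aff e1 memvB.
by rewrite /aff => h; apply/hW; rewrite e2 memvD.
Qed.

Lemma aff_shift p W q : aff p W q -> eqset (aff p W) (aff q W).
Proof.
move=> hq x; rewrite /aff.
have e1 : x - q = (x - p) - (q - p) by rewrite opprB addrA subrK.
have e2 : x - p = (x - q) + (q - p) by rewrite addrA subrK.
by split=> h; [rewrite e1 memvB | rewrite e2 memvD].
Qed.

Lemma aff_dir p q W1 W2 : eqset (aff p W1) (aff q W2) -> W1 = W2.
Proof.
move=> h; have hp : aff q W2 p by apply/(h p)/aff_pt.
have hq : aff p W1 q by apply/(h q)/aff_pt.
apply/vspaceP => x; apply/idP/idP => hx.
  have : aff q W2 (x + p) by apply/(h _); rewrite /aff addrK.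
  rewrite /aff => hh; have -> : x = (x + p - q) - (p - q) by rewrite opprB addrA subrK addrK.
  by rewrite memvB.
have : aff p W1 (x + q) by apply/(h _); rewrite /aff addrK.
rewrite /aff => hh; have -> : x = (x + q - p) - (q - p) by rewrite opprB addrA subrK addrK.
by rewrite memvB.
Qed.

Lemma eqset_sym (X Y : V -> Prop) : eqset X Y -> eqset Y X.
Proof. by move=> h x; split=> /h. Qed.
Lemma eqset_trans (X Y Z : V -> Prop) : eqset X Y -> eqset Y Z -> eqset X Z.
Proof. by move=> h1 h2 x; split=> [/h1/h2|/h2/h1]. Qed.

Lemma meet_aff p W1 W2 : eqset (meet (aff p W1) (aff p W2)) (aff p (W1 :&: W2)).
Proof. by move=> x; rewrite /meet /aff memv_cap; split=> [[-> ->]|/andP]. Qed.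

Lemma meet_eqset (X X' Y Y' : V -> Prop) : eqset X X' -> eqset Y Y' -> eqset (meet X Y) (meet X' Y').
Proof. by move=> h1 h2 x; rewrite /meet h1 h2. Qed.

Lemma join_eqset (X X' Y Y' : V -> Prop) : eqset X X' -> eqset Y Y' -> eqset (join X Y) (join X' Y').
Proof.
move=> h1 h2 x; rewrite /join; split=> H Z sZ hZ; apply: H sZ _ => y hy; apply: hZ.
  by rewrite -h1 -h2.
by rewrite h1 h2.
Qed.

Lemma join_eq (X Y : V -> Prop) p W : (X p \/ Y p) ->
  (forall y, X y \/ Y y -> aff p W y) ->
  (forall W', (forall y, X y \/ Y y -> aff p W' y) -> (W <= W')%VS) ->
  eqset (join X Y) (aff p W).
Proof.
move=> hp hin hmin x; split.
  by move=> H; apply: H => //; apply: aff_sub.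
move=> hx Z sZ hZ.
have [W' hW'] := sub_rep sZ (hZ p hp).
apply/hW'; rewrite /aff; apply: (subvP (hmin W' _)) => //.
by move=> y /hZ /hW'.
Qed.

Lemma join_aff p q W1 W2 :
  eqset (join (aff p W1) (aff q W2)) (aff p (W1 + W2 + <[q - p]>)).
Proof.
apply: join_eq; first by left; apply: aff_pt.
  move=> y [] h; rewrite /aff.
    by rewrite -[y - p]addr0 -[y - p]addr0 !memv_add ?mem0v.
  have -> : y - p = 0 + (y - q) + (q - p) by rewrite add0r addrA subrK.
  by rewrite !memv_add ?mem0v ?memv_line.
move=> W' h.
have hq : q - p \in W' by apply: (h q); right; apply: aff_pt.
rewrite !subv_add; apply/andP; split; first (apply/andP; split).
- apply/subvP => u hu.
  have H : aff p W1 (u + p) by rewrite /aff addrK.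
  by have := h _ (or_introl H); rewrite /aff addrK.
- apply/subvP => u hu.
  have H : aff q W2 (u + q) by rewrite /aff addrK.
  have H2 := h _ (or_intror H); rewrite /aff in H2.
  have -> : u = (u + q - p) - (q - p) by rewrite opprB addrA subrK addrK.
  by rewrite memvB.
- apply/subvP => u /vlineP [k ->]; by rewrite memvZ.
Qed.

Lemma join_same p W1 W2 :
  eqset (join (aff p W1) (aff p W2)) (aff p (W1 + W2)).
Proof.
apply: join_eq; first by left; apply: aff_pt.
  by move=> y [] h; rewrite /aff; [rewrite -[y - p]addr0 | rewrite -[y - p]add0r];
    rewrite memv_add ?mem0v.
move=> W' h; rewrite subv_add; apply/andP; split; apply/subvP => u hu.
  by have := h (u + p); rewrite /aff addrK; apply; left.
by have := h (u + p); rewrite /aff addrK; apply; right.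
Qed.

Lemma perp_aff (X Y : V -> Prop) p p' U W : eqset X (aff p U) -> eqset Y (aff p' W) ->
  (perp xi X Y <-> forall u w, u \in U -> w \in W -> xi u w = 0).
Proof.
move=> hX hY; split.
  move=> [_ [_ H]] u w hu hw.
  have := H p (u + p) p' (w + p'); rewrite !addrK; apply.
  - by apply/hX/aff_pt.
  - by apply/hX; rewrite /aff addrK.
  - by apply/hY/aff_pt.
  - by apply/hY; rewrite /aff addrK.
move=> H; split; first by exists p; apply/hX/aff_pt.
split; first by exists p'; apply/hY/aff_pt.
move=> a b c d /hX ha /hX hb /hY hc /hY hd.
have -> : b - a = (b - p) - (a - p) by rewrite opprB addrA subrK.
have -> : d - c = (d - p') - (c - p') by rewrite opprB addrA subrK.
by apply: H; rewrite memvB.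
Qed.


Definition side (X Y : {vspace V}) :=
  forall v, v \in Y -> exists2 d, d \in (X :&: Y)%VS & orth X (v - d).

Lemma side_sym X Y : side X Y -> side Y X.
Proof.
move=> h v vX; have [e eE oe] := proj (X :&: Y)%VS v.
exists e; first by rewrite capvC.
move=> y yY; have [d dE od] := h y yY.
have -> : y = d + (y - d) by rewrite addrC subrK.
rewrite xiDl (oe d dE) add0r hsym od //.
by rewrite memvB // (subvP (capvSl X Y)).
Qed.

Lemma cons_U X Y : side X Y -> exists U : {vspace V},
  [/\ (U <= Y)%VS, forall u, u \in U -> orth X u & (X :&: Y + U)%VS = Y].
Proof.
move=> h.
suff [U [hUY hUo hs]] : exists U : {vspace V},
    [/\ (U <= Y)%VS, forall u, u \in U -> orth X u & (Y <= X :&: Y + U)%VS].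
  exists U; split => //; apply/eqP; rewrite eqEsubv hs andbT subv_add hUY andbT.
  exact: capvSr.
suff H : forall s : seq V, all (fun v => v \in Y) s -> exists U : {vspace V},
    [/\ (U <= Y)%VS, forall u, u \in U -> orth X u & (<<s>> <= X :&: Y + U)%VS].
  have := H (vbasis Y); rewrite (span_basis (vbasisP Y)); apply.
  by apply/allP => v; apply: vbasis_mem.
elim=> [|v s IH] /=.
  move=> _; exists 0%VS; split; first exact: sub0v.
    by move=> u; rewrite memv0 => /eqP ->; apply: orth0.
  by rewrite span_nil sub0v.
move=> /andP [vY sY]; have [U [hUY hUo hs]] := IH sY.
have [d dE od] := h v vY.
exists (U + <[v - d]>)%VS; split.
- rewrite subv_add hUY /=; apply/subvP => u /vlineP [k ->]; rewrite memvZ //.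
  by rewrite memvB // (subvP (capvSr X Y)).
- move=> u /memv_addP [a aU [b /vlineP [k ->] ->]].
  by apply: orthD; [apply: hUo | apply: orthZ].
- rewrite span_cons subv_add; apply/andP; split.
    apply/subvP => u /vlineP [k ->]; rewrite memvZ //.
    have H : d + (0 + (v - d)) \in (X :&: Y + (U + <[v - d]>))%VS.
      by apply: memv_add => //; apply: memv_add; [apply: mem0v | apply: memv_line].
    by move: H; rewrite add0r addrC subrK.
  apply: (subv_trans hs); apply: addvS => //; exact: addvSl.
Qed.


Definition charP (A B : V -> Prop) := exists q WA WB,
  eqset A (aff q WA) /\ eqset B (aff q WB) /\ side WA WB.

Lemma eqset_refl (X : V -> Prop) : eqset X X.
Proof. by []. Qed.

Lemma char_perpo A B : charP A B -> perpo xi A B.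
Proof.
move=> [q [WA [WB [hA [hB hs]]]]].
have [U1 [s1 o1 e1]] := cons_U (side_sym hs).
have [U2 [s2 o2 e2]] := cons_U hs.
have hM : eqset (meet A B) (aff q (WA :&: WB)) :=
  eqset_trans (meet_eqset hA hB) (meet_aff q WA WB).
exists q; split; first by apply/hM/aff_pt.
exists (aff q U1), (aff q U2).
split; first exact: aff_sub. split; first exact: aff_sub.
split; first exact: aff_pt. split; first exact: aff_pt.
split.
  split; last by exists q; split; [apply: aff_pt | apply/hM/aff_pt].
  apply/(perp_aff (eqset_refl _) hM) => u w hu hw.
  by rewrite hsym; apply: o1 => //; move: hw; rewrite memv_cap => /andP[].
split.
  split; last by exists q; split; [apply: aff_pt | apply/hM/aff_pt].
  apply/(perp_aff (eqset_refl _) hM) => u w hu hw.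
  by rewrite hsym; apply: o2 => //; move: hw; rewrite memv_cap => /andP[].
split.
  split; last by exists q; split; apply: aff_pt.
  apply/(perp_aff (eqset_refl _) (eqset_refl _)) => u w hu hw.
  by apply: o2 => //; apply: (subvP s1).
split.
  apply: eqset_trans (join_eqset hM (eqset_refl _)) _.
  apply: eqset_trans (join_same _ _ _) _.
  by rewrite capvC e1; apply: eqset_sym.
apply: eqset_trans (join_eqset hM (eqset_refl _)) _.
apply: eqset_trans (join_same _ _ _) _.
by rewrite e2; apply: eqset_sym.
Qed.

Lemma perpo_char A B : subspace A -> subspace B -> perpo xi A B -> charP A B.
Proof.
move=> sA sB [q [[Aq Bq] [Z1 [Z2 [sZ1 [sZ2 [Z1q [Z2q [[p1 _] [[p2 _] [[p3 _] [j1 j2]]]]]]]]]]]].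
have [WA hA] := sub_rep sA Aq.
have [WB hB] := sub_rep sB Bq.
have [U1 h1] := sub_rep sZ1 Z1q.
have [U2 h2] := sub_rep sZ2 Z2q.
have hM : eqset (meet A B) (aff q (WA :&: WB)) :=
  eqset_trans (meet_eqset hA hB) (meet_aff q WA WB).
have q2 := (perp_aff h2 hM).1 p2.
have q3 := (perp_aff h1 h2).1 p3.
have eA : (WA :&: WB + U1)%VS = WA.
  apply: (@aff_dir q q); apply: eqset_trans (eqset_sym (join_same _ _ _)) _.
  apply: eqset_trans (eqset_sym (join_eqset hM h1)) _.
  by apply: eqset_trans j1 hA.
have eB : (WA :&: WB + U2)%VS = WB.
  apply: (@aff_dir q q); apply: eqset_trans (eqset_sym (join_same _ _ _)) _.
  apply: eqset_trans (eqset_sym (join_eqset hM h2)) _.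
  by apply: eqset_trans j2 hB.
exists q, WA, WB; split => //; split => //.
move=> v; rewrite -{1}eB => /memv_addP [d dD [u uU ->]].
exists d; first by [].
rewrite addrAC subrr add0r => a; rewrite -eA => /memv_addP [d' d'D [u1 u1U ->]].
by rewrite xiDl hsym q2 // q3 // addr0.
Qed.


Lemma incl_sub (X Y : V -> Prop) q W1 W2 :
  eqset X (aff q W1) -> eqset Y (aff q W2) -> incl X Y -> (W1 <= W2)%VS.
Proof.
move=> h1 h2 hi; apply/subvP => u hu.
have : aff q W2 (u + q) by apply/h2/hi/h1; rewrite /aff addrK.
by rewrite /aff addrK.
Qed.

Lemma shift_eq (X : V -> Prop) q W p : eqset X (aff q W) -> X p -> eqset X (aff p W).
Proof. by move=> h /h hp; apply: eqset_trans h (aff_shift hp). Qed.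

Lemma part_a A B : perpo xi A B -> subspace A -> subspace B -> perpo xi B A.
Proof.
move=> h sA sB; have [q [WA [WB [hA [hB hs]]]]] := perpo_char sA sB h.
by apply: char_perpo; exists q, WB, WA; do !split => //; apply: side_sym.
Qed.

Lemma part_c A B C : subspace A -> subspace B ->
  perpo xi A B -> parallel B C -> nonempty (meet A C) -> perpo xi A C.
Proof.
move=> sA sB h [t ht] [p [Ap Cp]].
have [q [WA [WB [hA [hB hs]]]]] := perpo_char sA sB h.
apply: char_perpo; exists p, WA, WB; split; first exact: shift_eq hA Ap.
split => //.
have hC : eqset C (aff (q + t) WB).
  move=> x; rewrite ht hB /aff.
  by have -> : x - t - q = x - (q + t) by rewrite opprD addrAC addrA.
exact: shift_eq hC Cp.
Qed.

Lemma part_f A B C : subspace A -> subspace B -> subspace C ->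
  perpo xi A B -> incl (meet A B) C -> incl C B -> perpo xi A C.
Proof.
move=> sA sB sC h i1 i2.
have [q [WA [WB [hA [hB hs]]]]] := perpo_char sA sB h.
have hM : eqset (meet A B) (aff q (WA :&: WB)) :=
  eqset_trans (meet_eqset hA hB) (meet_aff q WA WB).
have Cq : C q by apply/i1/hM/aff_pt.
have [WC hC] := sub_rep sC Cq.
have s1 := incl_sub hM hC i1.
have s2 := incl_sub hC hB i2.
apply: char_perpo; exists q, WA, WC; do 2!split => //.
move=> v /(subvP s2) /hs [d dD od]; exists d => //.
rewrite memv_cap (subvP s1) // andbT.
by move: dD; rewrite memv_cap => /andP[].
Qed.

Lemma part_g A B C : subspace A -> subspace B -> subspace C ->
  perpo xi A B -> incl (meet A B) C -> incl C A -> perpo xi A (join B C).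
Proof.
move=> sA sB sC h i1 i2.
have [q [WA [WB [hA [hB hs]]]]] := perpo_char sA sB h.
have hM : eqset (meet A B) (aff q (WA :&: WB)) :=
  eqset_trans (meet_eqset hA hB) (meet_aff q WA WB).
have Cq : C q by apply/i1/hM/aff_pt.
have [WC hC] := sub_rep sC Cq.
have s1 := incl_sub hM hC i1.
have s2 := incl_sub hC hA i2.
apply: char_perpo; exists q, WA, (WB + WC)%VS; split => //; split.
  exact: eqset_trans (join_eqset hB hC) (join_same _ _ _).
move=> v /memv_addP [b bB [c cC ->]].
have [d dD od] := hs b bB.
exists (d + c).
  move: dD; rewrite !memv_cap => /andP [dA dB].
  apply/andP; split; [exact: memvD dA (subvP s2 _ cC) | exact: memv_add dB cC].
by have -> : b + c - (d + c) = b - d by rewrite opprD addrACA subrr addr0.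
Qed.

Lemma part_e A B C : subspace A -> subspace B -> subspace C ->
  perpo xi A B -> perpo xi A C -> perpo xi A (join B C).
Proof.
move=> sA sB sC h1 h2.
have [q1 [WA [WB [hA [hB hs]]]]] := perpo_char sA sB h1.
have [q2 [WA' [WC [hA' [hC hs']]]]] := perpo_char sA sC h2.
have eA : WA' = WA.
  by apply: (@aff_dir q2 q1); apply: eqset_trans (eqset_sym hA') hA.
subst WA'.
have hq : q2 - q1 \in WA by apply/(hA q2)/hA'/aff_pt.
apply: char_perpo; exists q1, WA, (WB + WC + <[q2 - q1]>)%VS; split => //; split.
  exact: eqset_trans (join_eqset hB hC) (join_aff _ _ _ _).
move=> v /memv_addP [bc /memv_addP [b bB [c cC ->]] [l /vlineP [k ->] ->]].
have [d1 d1D od1] := hs b bB.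
have [d2 d2D od2] := hs' c cC.
move: d1D d2D; rewrite !memv_cap => /andP [d1A d1B] /andP [d2A d2C].
exists (d1 + d2 + k *: (q2 - q1)).
  rewrite memv_cap; apply/andP; split; first by rewrite !memvD ?memvZ.
  by apply: memv_add; [exact: memv_add d1B d2C | rewrite memvZ ?memv_line].
have -> : b + c + k *: (q2 - q1) - (d1 + d2 + k *: (q2 - q1)) = (b - d1) + (c - d2).
  by rewrite opprD addrACA subrr addr0 opprD addrACA.
exact: orthD.
Qed.

Lemma part_h A B C : subspace A -> subspace B -> subspace C ->
  perpo xi A B -> perpo xi A C -> nonempty (meet (meet A B) C) ->
  perpo xi A (meet B C).
Proof.
move=> sA sB sC h1 h2 [p [[Ap Bp] Cp]].
have [q1 [WA [WB [hA [hB hs]]]]] := perpo_char sA sB h1.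
have [q2 [WA' [WC [hA' [hC hs']]]]] := perpo_char sA sC h2.
have eA : WA' = WA.
  by apply: (@aff_dir q2 q1); apply: eqset_trans (eqset_sym hA') hA.
subst WA'.
apply: char_perpo; exists p, WA, (WB :&: WC)%VS; split; first exact: shift_eq hA Ap.
split.
  apply: eqset_trans (meet_eqset (shift_eq hB Bp) (shift_eq hC Cp)) _.
  exact: meet_aff.
move=> v; rewrite memv_cap => /andP [vB vC].
have [d1 d1D od1] := hs v vB.
have [d2 d2D od2] := hs' v vC.
move: d1D d2D; rewrite !memv_cap => /andP [d1A d1B] /andP [d2A d2C].
have e : d1 = d2.
  apply/eqP; rewrite -subr_eq0; apply/eqP; apply: (@orth_self WA); first by rewrite memvB.
  have e2 : (v - d2) - (v - d1) = d1 - d2 by rewrite opprB addrC addrA subrK.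
  rewrite -e2.
  exact: orthB.
exists d1 => //; by rewrite !memv_cap d1A d1B e d2C.
Qed.


Lemma part_d A B C : subspace A -> subspace B -> subspace C ->
  nonempty A -> incl A B -> incl B C ->
  exists B' : V -> Prop,
    (subspace B' /\ eqset (meet B B') A /\ perpo xi B B' /\ eqset (join B B') C) /\
    forall B'' : V -> Prop, subspace B'' ->
      eqset (meet B B'') A -> perpo xi B B'' -> eqset (join B B'') C ->
      eqset B'' B'.
Proof.
move=> sA sB sC [q Aq] iAB iBC.
have Bq : B q by apply: iAB.
have Cq : C q by apply: iBC.
have [WA hA] := sub_rep sA Aq.
have [WB hB] := sub_rep sB Bq.
have [WC hC] := sub_rep sC Cq.
have sAB := incl_sub hA hB iAB.
have sBC := incl_sub hB hC iBC.
have sBC' : side WB WC.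
  move=> v vC; have [e eB oe] := proj WB v; exists e => //.
  by rewrite memv_cap eB (subvP sBC).
have [U [sUC oU eU]] := cons_U sBC'.
rewrite (capv_idPl sBC) in eU.
have F1 : (WB :&: (WA + U))%VS = WA.
  apply/eqP; rewrite eqEsubv subv_cap sAB addvSl !andbT.
  apply/subvP => x; rewrite memv_cap => /andP [xB /memv_addP [a aA [u uU ex]]].
  have u0 : u = 0.
    apply: (@orth_self WB); last exact: oU.
    have -> : u = x - a by rewrite ex addrC addKr.
    by rewrite memvB // (subvP sAB).
  by rewrite ex u0 addr0.
have F2 : side WB (WA + U).
  move=> v /memv_addP [a aA [u uU ->]]; exists a.
    by rewrite memv_cap (subvP sAB) //= (subvP (addvSl WA U)).
  by rewrite addrAC subrr add0r; apply: oU.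
have F3 : (WB + (WA + U))%VS = WC.
  apply/eqP; rewrite eqEsubv !subv_add sBC sUC (subv_trans sAB sBC) /=.
  by rewrite -{1}eU addvS ?addvSr.
exists (aff q (WA + U)); split.
  split; first exact: aff_sub.
  split.
    apply: eqset_trans (meet_eqset hB (eqset_refl _)) _.
    apply: eqset_trans (meet_aff _ _ _) _; rewrite F1; exact: eqset_sym.
  split.
    by apply: char_perpo; exists q, WB, (WA + U)%VS.
  apply: eqset_trans (join_eqset hB (eqset_refl _)) _.
  apply: eqset_trans (join_same _ _ _) _; rewrite F3; exact: eqset_sym.
move=> B'' sB'' h1 h2 h3.
have B''q : B'' q by have := (h1 q).2 Aq; case.
have [W hW] := sub_rep sB'' B''q.
have eM : (WB :&: W)%VS = WA.
  apply: (@aff_dir q q); apply: eqset_trans (eqset_sym (meet_aff _ _ _)) _.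
  apply: eqset_trans (eqset_sym (meet_eqset hB hW)) _.
  exact: eqset_trans h1 hA.
have eJ : (WB + W)%VS = WC.
  apply: (@aff_dir q q); apply: eqset_trans (eqset_sym (join_same _ _ _)) _.
  apply: eqset_trans (eqset_sym (join_eqset hB hW)) _.
  exact: eqset_trans h3 hC.
have [q0 [WB0 [W0 [hB0 [hW0 hs]]]]] := perpo_char sB sB'' h2.
have e1 : WB0 = WB by apply: (@aff_dir q0 q); apply: eqset_trans (eqset_sym hB0) hB.
have e2 : W0 = W by apply: (@aff_dir q0 q); apply: eqset_trans (eqset_sym hW0) hW.
subst WB0 W0.
suff e : W = (WA + U)%VS by rewrite -e.
apply/eqP; rewrite eqEsubv; apply/andP; split.
  apply/subvP => v vW; have [d dD od] := hs v vW.
  rewrite eM in dD.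
  have vdC : v - d \in WC.
    apply: memvB; first by rewrite -eJ; apply: (subvP (addvSr WB W)).
    by apply: (subvP (subv_trans sAB sBC)).
  move: vdC; rewrite -eU => /memv_addP [b bB [u uU evd]].
  have b0 : b = 0.
    apply: (orth_self bB).
    have -> : b = (v - d) - u by rewrite evd addrK.
    by apply: orthB => //; apply: oU.
  have -> : v = d + u by rewrite -[u]add0r -b0 -evd addrC subrK.
  exact: memv_add.
rewrite subv_add; apply/andP; split; first by rewrite -eM capvSr.
apply/subvP => u uU.
have : u \in WC by apply: (subvP sUC).
rewrite -eJ => /memv_addP [b bB [w wW eu]].
have [d dD od] := hs w wW.
move: dD; rewrite memv_cap => /andP [dB dW].
have z : u - (w - d) = 0.
  apply: (@orth_self WB); last by apply: orthB => //; apply: oU.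
  have -> : u - (w - d) = b + d by rewrite eu opprB addrAC -addrA subrK.
  by rewrite memvD.
have -> : u = w - d by apply/eqP; rewrite -subr_eq0 z.
by rewrite memvB.
Qed.

End Aux.

Theorem proposition3p7 (F : fieldType) (V : vectType F) (xi : V -> V -> F)
  (hxi : good_form xi) :
  (* (a) *)
  (forall A B : V -> Prop, subspace A -> subspace B ->
     perpo xi A B -> perpo xi B A) /\
  (* (b) *)
  (forall A B : V -> Prop, subspace A -> subspace B ->
     perpo xi A B -> nonempty (meet A B)) /\
  (* (c) *)
  (forall A B C : V -> Prop, subspace A -> subspace B -> subspace C ->
     perpo xi A B -> parallel B C -> nonempty (meet A C) -> perpo xi A C) /\
  (* (d) *)
  (forall A B C : V -> Prop, subspace A -> subspace B -> subspace C ->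
     nonempty A -> incl A B -> ~ eqset A B -> incl B C -> ~ eqset B C ->
     exists B' : V -> Prop,
       (subspace B' /\ eqset (meet B B') A /\ perpo xi B B' /\ eqset (join B B') C) /\
       forall B'' : V -> Prop, subspace B'' ->
         eqset (meet B B'') A -> perpo xi B B'' -> eqset (join B B'') C ->
         eqset B'' B') /\
  (* (e) *)
  (forall A B C : V -> Prop, subspace A -> subspace B -> subspace C ->
     perpo xi A B -> perpo xi A C -> perpo xi A (join B C)) /\
  (* (f) *)
  (forall A B C : V -> Prop, subspace A -> subspace B -> subspace C ->
     perpo xi A B -> incl (meet A B) C -> incl C B -> perpo xi A C) /\
  (* (g) *)
  (forall A B C : V -> Prop, subspace A -> subspace B -> subspace C ->
     perpo xi A B -> incl (meet A B) C -> incl C A -> perpo xi A (join B C)) /\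
  (* (h) *)
  (forall A B C : V -> Prop, subspace A -> subspace B -> subspace C ->
     perpo xi A B -> perpo xi A C -> nonempty (meet (meet A B) C) ->
     perpo xi A (meet B C)).
Proof.
case: hxi => hl hs _ ha.
split; first by move=> A B sA sB h; exact: (part_a hl hs ha h sA sB).
split; first by move=> A B _ _ [q [hq _]]; exists q.
split; first by move=> A B C sA sB _ h hp hn; exact: (part_c hl hs ha sA sB h hp hn).
split; first by move=> A B C sA sB sC hn iAB _ iBC _; exact: (part_d hl hs ha sA sB sC hn iAB iBC).
split; first by move=> A B C sA sB sC h1 h2; exact: (part_e hl hs ha sA sB sC h1 h2).
split; first by move=> A B C sA sB sC h i1 i2; exact: (part_f hl hs ha sA sB sC h i1 i2).
split; first by move=> A B C sA sB sC h i1 i2; exact: (part_g hl hs ha sA sB sC h i1 i2).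
by move=> A B C sA sB sC h1 h2 hn; exact: (part_h hl hs ha sA sB sC h1 h2 hn).
Qed.
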